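(* Let $D(a_0,a_1,a_2;p)=\sum_{k=0}^2\binom{2}{k}p^k(1-p)^{2-k}|p-a_k|$ and let $(a_0,a_1,a_2)\in[0,1]^3$ minimize $\max_{p\in[0,1]}D(x_0,x_1,x_2;p)$ over $[0,1]^3$. Then $0<a_0<0.2<0.4<a_1<0.6<0.8<a_2<1$; moreover $a_1-a_0<0.4$ and $a_2-a_1<0.4$. *)

(* Defs.v *)
From HB Require Import structures.
From mathcomp Require Import all_boot all_order all_algebra.
From mathcomp Require Import all_classical all_reals.
Set Implicit Arguments. Unset Strict Implicit. Unset Printing Implicit Defensive.
Import Order.TTheory GRing.Theory Num.Theory.
Local Open Scope ring_scope.
Local Open Scope classical_set_scope.

Definition D (R : realType) (a0 a1 a2 p : R) : R :=
  \sum_(k < 3) ('C(2, k))%:R * p ^+ k * (1 - p) ^+ (2 - k) * `|p - [:: a0; a1; a2]`_k|.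

Definition maxD (R : realType) (a0 a1 a2 : R) : R :=
  sup [set D a0 a1 a2 p | p in [set p : R | 0 <= p <= 1]].

Definition in01 (R : realType) (x : R) : Prop := 0 <= x <= 1.

(* Main.v *)
Require Import Defs.
From HB Require Import structures.
From mathcomp Require Import all_boot all_order all_algebra.
From mathcomp Require Import all_classical all_reals.
From mathcomp Require Import ring lra.
Import Order.TTheory GRing.Theory Num.Theory.
Local Open Scope ring_scope.
Local Open Scope classical_set_scope.

Lemma Dexp (R : realType) (a0 a1 a2 p : R) : D a0 a1 a2 p =
  (1-p)^+2 * `|p - a0| + 2 * p * (1-p) * `|p - a1| + p^+2 * `|p - a2|.
Proof. rewrite /D !big_ord_recr big_ord0 /=. rewrite !binn bin0 bin1. rewrite !subn0 subnn !expr0 !expr1. ring. Qed.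


Lemma Dle1 (R : realType) (a0 a1 a2 p : R) : in01 a0 -> in01 a1 -> in01 a2 ->
  0 <= p <= 1 -> D a0 a1 a2 p <= 1.
Proof.
move=> /andP[? ?] /andP[? ?] /andP[? ?] /andP[? ?]; rewrite Dexp.
have h0 : `|p - a0| <= 1 by rewrite ler_norml; apply/andP; split; lra.
have h1 : `|p - a1| <= 1 by rewrite ler_norml; apply/andP; split; lra.
have h2 : `|p - a2| <= 1 by rewrite ler_norml; apply/andP; split; lra.
have e: 1 = (1-p)^+2 + 2 * p * (1-p) + p^+2 by ring.
rewrite [X in _ <= X]e.
apply: lerD; first apply: lerD.
- by rewrite ler_piMr // sqr_ge0.
- by rewrite ler_piMr //; apply: mulr_ge0; [apply: mulr_ge0|]; lra.
by rewrite ler_piMr // sqr_ge0.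
Qed.

Lemma D_le_max (R : realType) (a0 a1 a2 p : R) : in01 a0 -> in01 a1 -> in01 a2 ->
  0 <= p <= 1 -> D a0 a1 a2 p <= maxD a0 a1 a2.
Proof.
move=> h0 h1 h2 hp; rewrite /maxD; apply: ub_le_sup.
  exists 1 => _ [q hq <-]; exact: Dle1.
by exists p.
Qed.

Lemma maxD_le (R : realType) (a0 a1 a2 c : R) :
  (forall p, 0 <= p <= 1 -> D a0 a1 a2 p <= c) -> maxD a0 a1 a2 <= c.
Proof.
move=> h; apply: ge_sup; first by exists (D a0 a1 a2 0), 0 => //=; rewrite lexx ler01.
by move=> _ [q hq <-]; exact: h.
Qed.

Lemma absf {R : realType} (x : R) : x <= `|x| /\ - x <= `|x|.
Proof. by split; [exact: ler_norm | rewrite -normrN; exact: ler_norm]. Qed.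

Ltac pt h q x0 x1 x2 := have := h q ltac:(lra); rewrite Dexp => ?;
  have [? ?] := absf (q - x0); have [? ?] := absf (q - x1); have [? ?] := absf (q - x2).

Lemma g1 (R : realType) (a0 a1 a2 : R) : in01 a0 -> in01 a1 -> in01 a2 ->
 (forall p, 0 <= p <= 1 -> D a0 a1 a2 p <= 199/1000) -> 0 < a0.
Proof.
move=> /andP[? ?] /andP[? ?] /andP[? ?] h.
pt h (3/10 : R) a0 a1 a2.
pt h (7/10 : R) a0 a1 a2.
lra.
Qed.

Lemma g2 (R : realType) (a0 a1 a2 : R) : in01 a0 -> in01 a1 -> in01 a2 ->
 (forall p, 0 <= p <= 1 -> D a0 a1 a2 p <= 199/1000) -> 2/5 < a1.
Proof.
move=> /andP[? ?] /andP[? ?] /andP[? ?] h.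
pt h (0/10 : R) a0 a1 a2.
pt h (6/10 : R) a0 a1 a2.
pt h (9/10 : R) a0 a1 a2.
lra.
Qed.

Lemma g3 (R : realType) (a0 a1 a2 : R) : in01 a0 -> in01 a1 -> in01 a2 ->
 (forall p, 0 <= p <= 1 -> D a0 a1 a2 p <= 199/1000) -> a1 < 3/5.
Proof.
move=> /andP[? ?] /andP[? ?] /andP[? ?] h.
pt h (0/10 : R) a0 a1 a2.
pt h (3/10 : R) a0 a1 a2.
pt h (9/10 : R) a0 a1 a2.
lra.
Qed.

Lemma g4 (R : realType) (a0 a1 a2 : R) : in01 a0 -> in01 a1 -> in01 a2 ->
 (forall p, 0 <= p <= 1 -> D a0 a1 a2 p <= 199/1000) -> a2 < 1.
Proof.
move=> /andP[? ?] /andP[? ?] /andP[? ?] h.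
pt h (0/10 : R) a0 a1 a2.
pt h (6/10 : R) a0 a1 a2.
lra.
Qed.

Lemma g5 (R : realType) (a0 a1 a2 : R) : in01 a0 -> in01 a1 -> in01 a2 ->
 (forall p, 0 <= p <= 1 -> D a0 a1 a2 p <= 199/1000) -> a1 - a0 < 2/5.
Proof.
move=> /andP[? ?] /andP[? ?] /andP[? ?] h.
pt h (4/10 : R) a0 a1 a2.
pt h (10/10 : R) a0 a1 a2.
lra.
Qed.

Lemma g6 (R : realType) (a0 a1 a2 : R) : in01 a0 -> in01 a1 -> in01 a2 ->
 (forall p, 0 <= p <= 1 -> D a0 a1 a2 p <= 199/1000) -> a2 - a1 < 2/5.
Proof.
move=> /andP[? ?] /andP[? ?] /andP[? ?] h.
pt h (0/10 : R) a0 a1 a2.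
pt h (6/10 : R) a0 a1 a2.
lra.
Qed.

Lemma g7 (R : realType) (a0 a1 a2 : R) : in01 a0 -> in01 a1 -> in01 a2 ->
 (forall p, 0 <= p <= 1 -> D a0 a1 a2 p <= 199/1000) -> a0 < 1/5.
Proof.
move=> /andP[? ?] /andP[? ?] /andP[? ?] h.
pt h (0/10 : R) a0 a1 a2.
lra.
Qed.

Lemma g8 (R : realType) (a0 a1 a2 : R) : in01 a0 -> in01 a1 -> in01 a2 ->
 (forall p, 0 <= p <= 1 -> D a0 a1 a2 p <= 199/1000) -> 4/5 < a2.
Proof.
move=> /andP[? ?] /andP[? ?] /andP[? ?] h.
pt h (10/10 : R) a0 a1 a2.
lra.
Qed.
Lemma ubA (R : realType) (p : R) : 0 <= p <= 19/100 ->
  (1-p)^+2 * (19/100 - p) + 2 * p * (1-p) * (1/2 - p) + p^+2 * (81/100 - p) <= 199/1000.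
Proof. move=> /andP[? ?]. nra. Qed.
Lemma ubB (R : realType) (p : R) : 19/100 <= p <= 1/2 ->
  (1-p)^+2 * (p - 19/100) + 2 * p * (1-p) * (1/2 - p) + p^+2 * (81/100 - p) <= 199/1000.
Proof. move=> /andP[? ?].
have : 0 <= (p - 9/25)^+2 * (147/50 - 2 * p) by apply: mulr_ge0; [exact: sqr_ge0 | lra].
move=> ?; nra. Qed.
Lemma ubC (R : realType) (p : R) : 1/2 <= p <= 81/100 ->
  (1-p)^+2 * (p - 19/100) + 2 * p * (1-p) * (p - 1/2) + p^+2 * (81/100 - p) <= 199/1000.
Proof. move=> /andP[? ?].
have : 0 <= (p - 16/25)^+2 * (2 * p + 47/50) by apply: mulr_ge0; [exact: sqr_ge0 | lra].
move=> ?; nra. Qed.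
Lemma ubD (R : realType) (p : R) : 81/100 <= p <= 1 ->
  (1-p)^+2 * (p - 19/100) + 2 * p * (1-p) * (p - 1/2) + p^+2 * (p - 81/100) <= 199/1000.
Proof. move=> /andP[? ?]. nra. Qed.

Lemma ubAll (R : realType) (p : R) : 0 <= p <= 1 ->
  D (19/100) (1/2) (81/100) p <= 199/1000.
Proof.
move=> /andP[h0 h1]; rewrite (@Dexp R (19/100) (1/2) (81/100) p).
have [hA|hA] := boolP (p <= 19/100); last move: hA; last rewrite -ltNge => hA.
  have -> : `|p - 19/100| = 19/100 - p by rewrite ler0_norm ?opprB //; lra.
  have -> : `|p - 1/2| = 1/2 - p by rewrite ler0_norm ?opprB //; lra.
  have -> : `|p - 81/100| = 81/100 - p by rewrite ler0_norm ?opprB //; lra.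
  apply: ubA; apply/andP; split => //.
have -> : `|p - 19/100| = p - 19/100 by rewrite ger0_norm //; lra.
have [hB|hB] := boolP (p <= 1/2); last move: hB; last rewrite -ltNge => hB.
  have -> : `|p - 1/2| = 1/2 - p by rewrite ler0_norm ?opprB //; lra.
  have -> : `|p - 81/100| = 81/100 - p by rewrite ler0_norm ?opprB //; lra.
  apply: ubB; apply/andP; split => //; lra.
have -> : `|p - 1/2| = p - 1/2 by rewrite ger0_norm //; lra.
have [hC|hC] := boolP (p <= 81/100); last move: hC; last rewrite -ltNge => hC.
  have -> : `|p - 81/100| = 81/100 - p by rewrite ler0_norm ?opprB //; lra.
  apply: ubC; apply/andP; split => //; lra.
have -> : `|p - 81/100| = p - 81/100 by rewrite ger0_norm //; lra.
apply: ubD; apply/andP; split => //; lra.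
Qed.

Theorem lemma5p2 (R : realType) (a0 a1 a2 : R) :
  in01 a0 -> in01 a1 -> in01 a2 ->
  (forall x0 x1 x2 : R, in01 x0 -> in01 x1 -> in01 x2 ->
     maxD a0 a1 a2 <= maxD x0 x1 x2) ->
  (0 < a0 /\ a0 < 1/5 /\ 2/5 < a1 /\ a1 < 3/5 /\ 4/5 < a2 /\ a2 < 1) /\
  (a1 - a0 < 2/5 /\ a2 - a1 < 2/5).
Proof.
move=> i0 i1 i2 hmin.
have hx : maxD a0 a1 a2 <= 199/1000.
  apply: le_trans (hmin (19/100) (1/2) (81/100) _ _ _) _;
    rewrite ?/in01; try (apply/andP; split; lra).
  exact/maxD_le/ubAll.
have h : forall p, 0 <= p <= 1 -> D a0 a1 a2 p <= 199/1000.
  by move=> p hp; apply: le_trans hx; exact: D_le_max.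
split.
  split; first exact: g1 h.
  split; first exact: g7 h.
  split; first exact: g2 h.
  split; first exact: g3 h.
  split; first exact: g8 h.
  exact: g4 h.
split; [exact: g5 h|exact: g6 h].
Qed.
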